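(* Let $T,M,\delta,\tau$ be as in the setup, let $\rho^*=\mathrm{OPT}$, and let $\zeta\ge 0$. Let $\mathcal{H}$ be the family of all $k$-element subsets $U\subseteq V_T$ with $\mathcal{S}_U\neq\emptyset$. Build the directed flow network $Z$ with vertex set $\{s\}\cup\{x_U:U\in\mathcal{H}\}\cup V_T\cup\{z\}$ and arcs: $(s,x_U)$ with capacity $\tau(U)$ for each $U\in\mathcal{H}$; $(x_U,v)$ with capacity $+\infty$ for each $U\in\mathcal{H}$ and $v\in U$; $(v,z)$ with capacity $\zeta$ for each $v\in V_T$. Let $(\mathsf{S},\mathsf{Z})$ be a minimum $s$–$z$ cut of $Z$ (a partition of its vertices with $s\in\mathsf{S}$, $z\in\mathsf{Z}$ minimizing the total capacity of arcs from $\mathsf{S}$ to $\mathsf{Z}$). If $\mathsf{S}\cap V_T\neq\emptyset$ then $\zeta\le\rho^*$; otherwise $\zeta\ge\rho^*$.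
   Context: Setup. A temporal network is a pair $T=(V_T,E_T)$ where $V_T$ is a finite set of $n$ vertices and $E_T$ is a finite set of temporal edges $(u,v,t)$ with $u,v\in V_T$ and timestamp $t\in\mathbb{R}_{>0}$; timestamps are assumed distinct. A $k$-vertex $\ell$-edge temporal motif ($k,\ell\ge 2$) is a pair $M=(K,\sigma)$ where $K=(V_K,E_K)$ is a directed, weakly connected multigraph with $|V_K|=k$, $|E_K|=\ell$, and $\sigma$ is an ordering of $E_K$; equivalently $M$ is the sequence $\langle(x_1,y_1),\dots,(x_\ell,y_\ell)\rangle$ of its edges in the order $\sigma$. Given $\delta>0$, a $\delta$-instance of $M$ in a temporal network is a sequence $S=\langle(x'_1,y'_1,t'_1),\dots,(x'_\ell,y'_\ell,t'_\ell)\rangle$ of $\ell$ distinct temporal edges of that network with $t'_1<\dots<t'_\ell$ such that (1) there is a bijection $h$ from the set of vertices appearing in $S$ onto $V_K$ with $h(x'_i)=x_i$ and $h(y'_i)=y_i$ for all $i\in[\ell]$, and (2) $t'_\ell-t'_1\le\delta$. We write $v\in S$ if $v$ is an endpoint of some edge of $S$; every $\delta$-instance contains exactly $k$ vertices. For $W\subseteq V_T$, $T[W]=(W,\{(u,v,t)\in E_T:u,v\in W\})$ is the induced temporal subnetwork and $\mathcal{S}_W$ is the set of $\delta$-instances of $M$ in $T[W]$. A weighting function $\tau$ assigns a weight $\tau(S)>0$ to each $\delta$-instance $S$ of $M$ in $T$; for $W\subseteq V_T$, $\tau(W)=\sum_{S\in\mathcal{S}_W}\tau(S)$. The temporal motif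 degree of $v$ in $T[W]$ is $C_W(v)=\sum_{S\in\mathcal{S}_W:\,v\in S}\tau(S)$. The density of a nonempty $W\subseteq V_T$ is $\rho(W)=\tau(W)/|W|$, and $\mathrm{OPT}=\max_{\emptyset\ne W\subseteq V_T}\rho(W)$ is the optimal value of the Temporal Motif Densest Subnetwork (TMDS) problem. *)

(* Defs.v *)
From HB Require Import structures.
From mathcomp Require Import all_boot all_order all_algebra.
From mathcomp Require Import reals constructive_ereal.
Set Implicit Arguments. Unset Strict Implicit. Unset Printing Implicit Defensive.
Import Order.TTheory GRing.Theory Num.Theory.
Local Open Scope ring_scope.

(* A temporal network T = (V_T, E_T): vertices are the finite type V; temporal
   edges are the elements of the finite type E, the edge e being the triple
   (tsrc e, tdst e, time e). *)
Definition temporal_network (R : realType) (V E : finType)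
  (tsrc tdst : E -> V) (time : E -> R) : Prop :=
  (forall e, 0 < time e) /\ injective time.

(* A k-vertex l-edge temporal motif: V_K = 'I_k, the edges listed in the order
   sigma as M : 'I_l -> 'I_k * 'I_k (multigraph: repetitions allowed). *)
Definition motif_rel (k l : nat) (M : 'I_l -> 'I_k * 'I_k) : rel 'I_k :=
  fun i j => [exists e : 'I_l, (M e == (i, j)) || (M e == (j, i))].

Definition is_motif (k l : nat) (M : 'I_l -> 'I_k * 'I_k) : Prop :=
  (2 <= k)%N /\ (2 <= l)%N /\ (forall i j : 'I_k, connect (motif_rel M) i j).

Section Instances.
Variables (R : realType) (V E : finType) (tsrc tdst : E -> V) (time : E -> R).
Variables (k l : nat) (M : 'I_l -> 'I_k * 'I_k) (delta : R).

Definition verts (S : {ffun 'I_l -> E}) : {set V} :=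
  [set v | [exists i, (tsrc (S i) == v) || (tdst (S i) == v)]].

Definition is_instance (S : {ffun 'I_l -> E}) : bool :=
  [&& [forall i, forall j, (S i == S j) ==> (i == j)],
      [forall i : 'I_l, forall j : 'I_l, (i < j)%N ==> (time (S i) < time (S j))],
      [exists h : {ffun V -> 'I_k},
         [&& [forall v in verts S, forall w in verts S, (h v == h w) ==> (v == w)],
             [forall j : 'I_k, exists v in verts S, h v == j] &
             [forall i : 'I_l, (h (tsrc (S i)) == (M i).1) && (h (tdst (S i)) == (M i).2)]]] &
      [forall i : 'I_l, forall j : 'I_l, time (S j) - time (S i) <= delta]].

Definition instances_in (W : {set V}) : {set {ffun 'I_l -> E}} :=
  [set S | is_instance S && (verts S \subset W)].

Variable tau : {ffun 'I_l -> E} -> R.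

Definition tauW (W : {set V}) : R := \sum_(S in instances_in W) tau S.

Definition density (W : {set V}) : R := tauW W / #|W|%:R.

Definition is_OPT (rho : R) : Prop :=
  (exists2 W : {set V}, W != set0 & density W = rho) /\
  (forall W : {set V}, W != set0 -> density W <= rho).

Definition Hfam : pred {set V} :=
  fun U => (#|U| == k) && (instances_in U != set0).

Definition Hsub := {U : {set V} | Hfam U}.

Definition node := ((unit + unit) + (Hsub + V))%type.
Definition s_node : node := inl (inl tt).
Definition z_node : node := inl (inr tt).
Definition x_node (U : Hsub) : node := inr (inl U).
Definition v_node (v : V) : node := inr (inr v).

Variable zeta : R.

(* capacities (0 = no arc) *)
Definition cap (a b : node) : \bar R :=
  match a, b with
  | inl (inl _), inr (inl U) => (tauW (val U))%:E
  | inr (inl U), inr (inr v) => if v \in val U then +oo%E else 0%E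
  | inr (inr _), inl (inr _) => zeta%:E
  | _, _ => 0%E
  end.

Definition cut_capacity (C : {set node}) : \bar R :=
  (\sum_(a in C) \sum_(b in ~: C) cap a b)%E.

Definition is_min_cut (C : {set node}) : Prop :=
  [/\ s_node \in C, z_node \notin C &
      forall C' : {set node}, s_node \in C' -> z_node \notin C' ->
        (cut_capacity C <= cut_capacity C')%E].

End Instances.

(* Main.v *)
Require Import Defs.
From HB Require Import structures.
From mathcomp Require Import all_boot all_order all_algebra.
From mathcomp Require Import reals constructive_ereal.
From mathcomp Require Import lra.
Set Implicit Arguments. Unset Strict Implicit. Unset Printing Implicit Defensive.
Import Order.TTheory GRing.Theory Num.Theory.
Local Open Scope ring_scope.

Section Proof.
Variables (R : realType) (V E : finType) (tsrc tdst : E -> V) (time : E -> R).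
Variables (k l : nat) (M : 'I_l -> 'I_k * 'I_k) (delta : R).
Variable tau : {ffun 'I_l -> E} -> R.
Variable zeta : R.

Local Notation Node := (node tsrc tdst time M delta).
Local Notation HS := (Hsub tsrc tdst time M delta).
Local Notation sN := (s_node tsrc tdst time M delta).
Local Notation zN := (z_node tsrc tdst time M delta).
Local Notation xN := (x_node (tsrc:=tsrc) (tdst:=tdst) (time:=time) (M:=M) (delta:=delta)).
Local Notation vN := (v_node tsrc tdst time M delta).
Local Notation tW := (tauW tsrc tdst time M delta tau).
Local Notation capN := (cap tau zeta).

Lemma sum_unit (F : unit -> \bar R) : (\sum_(i : unit) F i = F tt)%E.
Proof. by rewrite (big_pred1 tt) // => -[]. Qed.

Lemma sum_node (F : Node -> \bar R) :
  (\sum_(n : Node) F n = F sN + F zN + \sum_(U : HS) F (xN U) + \sum_(v : V) F (vN v))%E.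
Proof.
rewrite big_sumType big_sumType big_sumType !sum_unit.
rewrite -addeA. reflexivity.
Qed.
Lemma cut_formula (C : {set Node}) : sN \in C -> zN \notin C ->
  cut_capacity tau zeta C =
  ((\sum_(U : HS) (if xN U \in C then 0 else (tW (val U))%:E)) +
   (\sum_(U : HS) (if xN U \in C then
        \sum_(v : V) (if (vN v \notin C) && (v \in val U) then +oo else 0) else 0)) +
   \sum_(v : V) (if vN v \in C then zeta%:E else 0))%E.
Proof.
move=> Hs Hz.
rewrite /cut_capacity big_mkcond sum_node Hs (negbTE Hz).
rewrite big_mkcond sum_node /= !in_setC Hs (negbTE Hz) /= add0e.
rewrite [X in (_ + X + _ + _ + _)%E]big1; last by move=> v _; case: ifP.
rewrite adde0 adde0.
congr (_ + _ + _)%E.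
- by rewrite ?add0r; apply: eq_bigr => U _; rewrite in_setC if_neg.
- apply: eq_bigr => U _; case: ifP => // _.
  rewrite big_mkcond sum_node /= !in_setC Hs (negbTE Hz) /= ?add0r ?add0e.
  rewrite big1 ?add0r ?add0e; last by move=> U' _; case: ifP.
  by apply: eq_bigr => v _; rewrite in_setC; case: ifP.
- apply: eq_bigr => v _; case: ifP => // _.
  rewrite big_mkcond sum_node /= !in_setC Hs (negbTE Hz) /= ?add0r ?add0e.
  rewrite big1 ?addr0 ?adde0; last by move=> U' _; case: ifP.
  by rewrite big1 ?addr0 ?adde0; last by move=> U' _; case: ifP.
Qed.

Definition CW (W : {set V}) : {set Node} :=
  [set n : Node | match n with
                  | inl (inl _) => true
                  | inl (inr _) => false
                  | inr (inl U) => val U \subset W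
                  | inr (inr v) => v \in W end].

Lemma CW_s W : sN \in CW W. Proof. by rewrite inE. Qed.
Lemma CW_z W : zN \notin CW W. Proof. by rewrite inE. Qed.

Lemma cut_CW W : cut_capacity tau zeta (CW W) =
  ((\sum_(U : HS) (if val U \subset W then 0 else (tW (val U))%:E)) +
   \sum_(v : V) (if v \in W then zeta%:E else 0))%E.
Proof.
rewrite cut_formula ?CW_s ?CW_z //.
rewrite [X in (_ + X + _)%E]big1 ?adde0.
  by congr (_ + _)%E; apply: eq_bigr => ? _; rewrite inE.
move=> U _; rewrite inE; case: ifP => // HU.
apply: big1 => v _; rewrite inE.
case: ifP => //; case/andP => Hv HvU.
by move/subsetP: HU => /(_ v HvU); rewrite (negbTE Hv).
Qed.

Lemma le_sum1 (I : finType) (F : I -> \bar R) i :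
  (forall j, 0 <= F j)%E -> (F i <= \sum_j F j)%E.
Proof.
move=> H; rewrite (bigD1 i) //=; apply: leeDl; exact: sume_ge0.
Qed.

Lemma cut_ge (C : {set Node}) : sN \in C -> zN \notin C ->
  (forall U : HS, 0 <= tW (val U)) -> 0 <= zeta ->
  (cut_capacity tau zeta (CW [set v | vN v \in C]) <= cut_capacity tau zeta C)%E.
Proof.
move=> Hs Hz Ht Hzeta.
have mid_ge0 : (0 <= \sum_(U : HS) ((if xN U \in C then
        \sum_(v : V) ((if (vN v \notin C) && (v \in val U) then +oo else 0) : \bar R) else 0) : \bar R))%E.
  apply: sume_ge0 => U _; case: ifP => // _; apply: sume_ge0 => v _; by case: ifP => _ //; rewrite leey.
have first_ge0 : (0 <= \sum_(U : HS) ((if xN U \in C then 0 else (tW (val U))%:E) : \bar R))%E.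
  apply: sume_ge0 => U _; case: ifP => // _; by rewrite lee_fin; apply: Ht.
have third_ge0 : (0 <= \sum_(v : V) ((if vN v \in C then zeta%:E else 0) : \bar R))%E.
  apply: sume_ge0 => v _; case: ifP => // _; by rewrite lee_fin.
rewrite cut_CW cut_formula //.
case: (pickP (fun U : HS => (xN U \in C) && ~~ (val U \subset [set v | vN v \in C]))) => [U /andP [HUC HUW]|Hno].
  apply: le_trans (leey _) _.
  case/subsetPn: HUW => v HvU; rewrite inE => Hv.
  have HB : (+oo <= ((if xN U \in C then
        \sum_(v : V) ((if (vN v \notin C) && (v \in val U) then +oo else 0) : \bar R) else 0) : \bar R))%E.
    rewrite HUC.
    have H0 : forall w, (0 <= ((if (vN w \notin C) && (w \in val U) then +oo else 0) : \bar R))%E.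
      by move=> w; case: ifP => _ //; rewrite leey.
    by have := @le_sum1 _ _ v H0; rewrite Hv HvU.
  apply: le_trans HB _.
  have H1 : forall U', (0 <= ((if xN U' \in C then
        \sum_(v : V) ((if (vN v \notin C) && (v \in val U') then +oo else 0) : \bar R) else 0) : \bar R))%E.
    by move=> U'; case: ifP => // _; apply: sume_ge0 => w _; by case: ifP => _ //; rewrite leey.
  apply: le_trans (@le_sum1 _ _ U H1) _.
  apply: le_trans (leeDr _ first_ge0) _; apply: leeDl => //.
apply: leeD; last by apply: lee_sum => v _; rewrite inE.
apply: le_trans (leeDl _ mid_ge0).
apply: lee_sum => U _; case: ifP => HU; case: ifP => HUC //.
- by rewrite lee_fin.
- by have := Hno U; rewrite HUC HU.
Qed.

Local Notation inst := (is_instance tsrc tdst time M delta).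
Local Notation insts := (instances_in tsrc tdst time M delta).
Local Notation vts := (verts tsrc tdst).

Lemma card_verts S : inst S -> #|vts S| = k.
Proof.
case/and4P => _ _ /existsP [h /and3P [Hinj Hsurj _]] _.
have inj : {in vts S &, injective h}.
  move=> v w Hv Hw Heq.
  move/forall_inP: Hinj => /(_ v Hv) /forall_inP /(_ w Hw) /implyP.
  by move=> /(_ (introT eqP Heq)) /eqP.
rewrite -(card_in_imset inj).
have -> : h @: vts S = [set: 'I_k].
  apply/setP => j; rewrite inE.
  move/forallP: Hsurj => /(_ j) /exists_inP [v Hv /eqP <-].
  by apply/imsetP; exists v.
by rewrite cardsT card_ord.
Qed.

Lemma Hfam_verts S : inst S -> Hfam tsrc tdst time M delta (vts S).
Proof.
move=> Hi; rewrite /Hfam card_verts // eqxx /=.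
by apply/set0Pn; exists S; rewrite inE Hi subxx.
Qed.

Lemma HS_card (U : HS) : #|val U| = k.
Proof. by case: U => U /= /andP [/eqP]. Qed.

Lemma tW_ge0 W : (forall S, inst S -> 0 < tau S) -> 0 <= tW W.
Proof.
move=> Hpos; apply: sumr_ge0 => S; rewrite inE => /andP [Hi _].
exact: ltW (Hpos S Hi).
Qed.

Lemma partition W :
  tW W = \sum_(U : HS | val U \subset W) tW (val U).
Proof.
rewrite /tauW.
under [RHS]eq_bigr do rewrite big_mkcond.
rewrite big_mkcond /= exchange_big /=.
rewrite [LHS]big_mkcond /=.
apply: eq_bigr => S _.
rewrite inE; case: ifP => [/andP [Hi HSW]|HnS].
  pose U0 : HS := exist _ (vts S) (Hfam_verts Hi).
  rewrite (bigD1 U0) /=; last exact: HSW.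
  rewrite inE Hi subxx /=.
  rewrite big1 ?addr0 // => U /andP [HUW HU].
  rewrite inE; case: ifP => // /andP [_ HSU].
  exfalso; move/negP: HU; apply; apply/eqP/val_inj => /=.
  apply/esym/eqP; rewrite eqEcard HSU HS_card card_verts //; apply/andP; split=> //.
by apply/esym; apply: big1 => U HUW;
rewrite inE; case: ifP => // /andP [Hi HSU];
move: HnS; rewrite Hi (subset_trans HSU HUW).
Qed.

Definition g (W : {set V}) : R :=
  \sum_(U : HS | ~~ (val U \subset W)) tW (val U) + zeta * #|W|%:R.

Lemma cut_CW' W : cut_capacity tau zeta (CW W) = (g W)%:E.
Proof.
rewrite cut_CW /g EFinD; congr (_ + _)%E.
  rewrite -sumEFin [RHS]big_mkcond /=; apply: eq_bigr => U _; by rewrite if_neg.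
rewrite -big_mkcond /= sumEFin sumr_const mulr_natr //.
Qed.

Lemma gE W : g W = \sum_(U : HS) tW (val U) - tW W + zeta * #|W|%:R.
Proof.
rewrite /g (bigID (fun U : HS => val U \subset W) predT) /= -partition.
by rewrite (addrC (tW W)) addrK.
Qed.

Lemma tW0 : (2 <= k)%N -> tW set0 = 0.
Proof.
move=> Hk; apply: big1 => S; rewrite inE => /andP [Hi Hs].
move: Hs; rewrite subset0 => /eqP H.
have := card_verts Hi; rewrite H cards0 => Hk0.
by rewrite -Hk0 in Hk.
Qed.

Lemma main rho (C : {set Node}) :
  (forall S, inst S -> 0 < tau S) -> is_OPT tsrc tdst time M delta tau rho ->
  0 <= zeta -> (2 <= k)%N -> is_min_cut tau zeta C ->
  ((exists v : V, vN v \in C) -> zeta <= rho) /\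
  ((forall v : V, vN v \notin C) -> rho <= zeta).
Proof.
move=> Hpos [[W1 HW1 HdW1] Hopt] Hz0 Hk [Hs Hz Hmin].
set W0 := [set v | vN v \in C].
have Ht : forall U : HS, 0 <= tW (val U) := fun U => tW_ge0 (val U) Hpos.
have key : forall W, g W0 <= g W.
  move=> W; have := le_trans (cut_ge Hs Hz Ht Hz0) (Hmin _ (CW_s W) (CW_z W)).
  by rewrite !cut_CW' lee_fin.
have H0 := tW_ge0 set0 Hpos.
split.
  case=> v Hv.
  have HW0 : W0 != set0 by apply/set0Pn; exists v; rewrite inE.
  apply: le_trans (Hopt _ HW0).
  rewrite /density ler_pdivlMr ?ltr0n ?card_gt0 //.
  have := key set0; rewrite !gE cards0 mulr0.
  have := tW_ge0 W0 Hpos. lra.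
move=> Hno.
have HW0 : W0 = set0 by apply/setP => v; rewrite !inE; apply/negbTE.
rewrite -HdW1 /density ler_pdivrMr ?ltr0n ?card_gt0 //.
have := key W1; rewrite HW0 !gE cards0 mulr0 tW0 //. lra.
Qed.
End Proof.

Unset Implicit Arguments.
Set Strict Implicit.
Set Printing Implicit Defensive.

Theorem lemmaF1 (R : realType) (V E : finType) (tsrc tdst : E -> V) (time : E -> R)
  (k l : nat) (M : 'I_l -> 'I_k * 'I_k) (delta : R)
  (tau : {ffun 'I_l -> E} -> R) (zeta rho_star : R) (C : {set node tsrc tdst time M delta}) :
  temporal_network tsrc tdst time ->
  is_motif M ->
  0 < delta ->
  (forall S, is_instance tsrc tdst time M delta S -> 0 < tau S) ->
  is_OPT tsrc tdst time M delta tau rho_star ->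
  0 <= zeta ->
  is_min_cut tau zeta C ->
  ((exists v : V, v_node tsrc tdst time M delta v \in C) -> zeta <= rho_star) /\
  ((forall v : V, v_node tsrc tdst time M delta v \notin C) -> rho_star <= zeta).
Proof.
move=> _ [Hk _] _ Hpos Hopt Hz0 Hmin.
exact: (main Hpos Hopt Hz0 Hk Hmin).
Qed.
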